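(* Let $\mu\in\mathbb{R}$ and $\sigma>0$, and let $\mathcal{L}(\mu,\sigma)$ be the set of probability distributions $F$ on $\mathbb{R}$ with $\mathbb{E}^F[X]=\mu$ and $\mathbb{E}^F[X^2]=\mu^2+\sigma^2$. For any $F\in\mathcal{L}(\mu,\sigma)$ there exists a two-point distribution $F^*\in\mathcal{L}(\mu,\sigma)$ whose support is contained in $[\mathrm{ess\mbox{-}inf}\,F,\ \mathrm{ess\mbox{-}sup}\,F]$. Moreover, if $F$ is symmetric, then such a two-point distribution $F^*$ can be chosen to be symmetric.
   Context: A two-point distribution is the law of a random variable $X$ with $\mathbb{P}(X=x_1)=p_1$, $\mathbb{P}(X=x_2)=p_2$, where $0\le p_i<1$ and $p_1+p_2=1$. $\mathrm{ess\mbox{-}inf}\,F$ and $\mathrm{ess\mbox{-}sup}\,F$ are the essential infimum and supremum of a random variable with distribution $F$ (possibly $\mp\infty$). A distribution of $X$ is symmetric if there is $a\in\mathbb{R}$ with $\mathbb{P}(X-a>x)=\mathbb{P}(X-a<-x)$ for all $x\in\mathbb{R}$. *)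

(* Defs.v *)
From HB Require Import structures.
From mathcomp Require Import all_boot all_order all_algebra.
From mathcomp Require Import all_classical all_reals all_analysis.
From mathcomp Require Import ess_sup_inf.
Set Implicit Arguments. Unset Strict Implicit. Unset Printing Implicit Defensive.
Import Order.TTheory GRing.Theory Num.Theory.
Import numFieldNormedType.Exports.
Local Open Scope classical_set_scope.
Local Open Scope ring_scope.

Definition in_L {R : realType} (m s : R) (F : probability R R) : Prop :=
  F.-integrable setT (fun x : R => x%:E) /\
  F.-integrable setT (fun x : R => (x ^+ 2)%:E) /\
  (\int[F]_x (x%:E) = m%:E)%E /\
  (\int[F]_x ((x ^+ 2)%:E) = (m ^+ 2 + s ^+ 2)%:E)%E.

Definition two_point_in {R : realType} (S : set R) (F : probability R R) : Prop :=
  exists x1 x2 p1 p2 : R,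
    [/\ 0 <= p1 < 1, 0 <= p2 < 1, p1 + p2 = 1, x1 \in S /\ x2 \in S &
      forall A : set R, measurable A ->
        F A = (p1%:E * \d_x1 A + p2%:E * \d_x2 A)%E].

Definition symmetric_distr {R : realType} (F : probability R R) : Prop :=
  exists a : R, forall x : R,
    F [set y : R | y - a > x] = F [set y : R | y - a < - x].

Definition ess_inf_distr {R : realType} (F : probability R R) : \bar R :=
  ess_inf F (fun x : R => x%:E).
Definition ess_sup_distr {R : realType} (F : probability R R) : \bar R :=
  ess_sup F (fun x : R => x%:E).

Definition ess_range {R : realType} (F : probability R R) : set R :=
  [set x : R | (ess_inf_distr F <= x%:E)%E /\ (x%:E <= ess_sup_distr F)%E].

(* Main.v *)
Require Import Defs.
From HB Require Import structures.
From mathcomp Require Import all_boot all_order all_algebra.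
From mathcomp Require Import all_classical all_reals all_analysis.
From mathcomp Require Import ess_sup_inf measurable_realfun.
From mathcomp Require Import ring lra.
Import Order.TTheory GRing.Theory Num.Theory.
Import numFieldNormedType.Exports.
Local Open Scope classical_set_scope.
Local Open Scope ring_scope.

Section twopoint.
Context {R : realType} (x1 x2 p : R) (p0 : 0 <= p) (p1 : p <= 1).

Let q0 : 0 <= 1 - p. Proof. by rewrite subr_ge0. Qed.

Definition tp_meas : {measure set R -> \bar R} :=
  measure_add (mscale (NngNum p0) (@dirac _ R x1 R))
              (mscale (NngNum q0) (@dirac _ R x2 R)).

Definition tpf (A : set R) : \bar R := tp_meas A.

Let tpf0 : tpf set0 = 0%E. Proof. exact: measure0. Qed.
Let tpf_ge0 A : (0 <= tpf A)%E. Proof. exact: measure_ge0. Qed.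
Let tpf_ssa : semi_sigma_additive tpf.
Proof. exact: measure_semi_sigma_additive. Qed.

HB.instance Definition _ := isMeasure.Build _ _ _ tpf tpf0 tpf_ge0 tpf_ssa.

Lemma tpfE A : tpf A = (p%:E * \d_x1 A + (1 - p)%:E * \d_x2 A)%E.
Proof. exact: measure_addE. Qed.

Let tpfT : tpf setT = 1%E.
Proof. by rewrite tpfE !diracT !mule1 -EFinD subrKC. Qed.

HB.instance Definition _ := Measure_isProbability.Build _ _ _ tpf tpfT.

Lemma tp_int_ge0 (g : R -> \bar R) : measurable_fun setT g ->
  (forall x, 0 <= g x)%E ->
  (\int[tpf]_x g x = p%:E * g x1 + (1 - p)%:E * g x2)%E.
Proof.
move=> mg g0.
rewrite (eq_measure_integral tp_meas) //.
rewrite ge0_integral_measure_add //.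
rewrite !ge0_integral_mscale //= !integral_dirac //= !diracT !mul1e.
by [].
Qed.

Lemma maxr0_sub (r : R) : Num.max r 0 - Num.max (- r) 0 = r.
Proof.
have [r0|r0] := leP r 0.
  by rewrite (max_l _) ?oppr_ge0 // sub0r opprK.
by rewrite (max_r _) ?subr0 // oppr_le0 ltW.
Qed.

Lemma tp_int (h : R -> R) : measurable_fun setT h ->
  tpf.-integrable setT (EFin \o h) /\
  (\int[tpf]_x (h x)%:E = (p * h x1 + (1 - p) * h x2)%:E)%E.
Proof.
move=> mh.
have mE : measurable_fun setT (EFin \o h) by exact/measurable_EFinP.
split.
  apply/integrableP; split => //.
  rewrite tp_int_ge0 //; last first.
    by apply: measurableT_comp.
  by rewrite /= -!EFinM -EFinD ltry.
rewrite integralE.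
rewrite !tp_int_ge0 //; last 2 first.
- exact: measurable_funeneg.
- exact: measurable_funepos.
rewrite !funeposE !funenegE /= -!EFin_max -!EFinM -!EFinD.
congr EFin.
rewrite opprD addrACA -!mulrBr !maxr0_sub.
by [].
Qed.

End twopoint.
Section rvs.
Context {R : realType}.
Definition shiftY (a : R) : R -> R := fun y => y - a.
Definition shiftZ (a : R) : R -> R := fun y => a - y.
Lemma mshiftY a : measurable_fun setT (shiftY a).
Proof. by apply: measurable_funB => //; exact: measurable_cst. Qed.
Lemma mshiftZ a : measurable_fun setT (shiftZ a).
Proof. by apply: measurable_funB => //; exact: measurable_cst. Qed.
HB.instance Definition _ a := isMeasurableFun.Build _ _ R R (shiftY a) (mshiftY a).
HB.instance Definition _ a := isMeasurableFun.Build _ _ R R (shiftZ a) (mshiftZ a).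

Lemma mgt (a c : R) : measurable [set y : R | c < y - a].
Proof.
have -> : [set y : R | c < y - a] = `]c + a, +oo[%classic.
  by apply/seteqP; split => y /=; rewrite in_itv /= andbT => H; lra.
exact: measurable_itv.
Qed.

Lemma mlt (a c : R) : measurable [set y : R | y - a < c].
Proof.
have -> : [set y : R | y - a < c] = `]-oo, c + a[%classic.
  by apply/seteqP; split => y /=; rewrite in_itv /= => H; lra.
exact: measurable_itv.
Qed.
End rvs.

Section moments.
Context {R : realType} (m s : R) (hs : 0 < s) (F : probability R R)
  (HL : in_L m s F).

Let intX : F.-integrable setT (fun x : R => x%:E). Proof. by case: HL. Qed.
Let intX2 : F.-integrable setT (fun x : R => (x ^+ 2)%:E). Proof. by case: HL => _ []. Qed.
Let EX : (\int[F]_x (x%:E) = m%:E)%E. Proof. by case: HL => _ [_ []]. Qed.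
Let EX2 : (\int[F]_x ((x ^+ 2)%:E) = (m ^+ 2 + s ^+ 2)%:E)%E.
Proof. by case: HL => _ [_ []]. Qed.

Definition poly2 (a b c : R) (x : R) := a * x ^+ 2 + b * x + c.

Let poly2E a b c : (fun x => (poly2 a b c x)%:E) =
  (((fun x => a%:E * (x ^+ 2)%:E) \+ (fun x => b%:E * x%:E)) \+ (EFin \o cst c))%E.
Proof. by apply/funext => x; rewrite /poly2 /= -!EFinM -!EFinD. Qed.

Lemma int_poly a b c : F.-integrable setT (EFin \o poly2 a b c).
Proof.
have -> : EFin \o poly2 a b c = (fun x => (poly2 a b c x)%:E) by [].
rewrite poly2E; apply: integrableD => //; last first.
  exact: finite_measure_integrable_cst.
by apply: integrableD => //; apply: integrableZl.
Qed.

Lemma I_poly a b c :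
  (\int[F]_x ((poly2 a b c x)%:E) = (a * (m ^+ 2 + s ^+ 2) + b * m + c)%:E)%E.
Proof.
rewrite poly2E integralD //; last first.
- exact: finite_measure_integrable_cst.
- by apply: integrableD => //; apply: integrableZl.
rewrite integralD //; [|exact: integrableZl|exact: integrableZl].
rewrite !integralZl // EX EX2.
have -> : (\int[F]_x (EFin \o cst c) x = c%:E)%E.
  rewrite (_ : EFin \o cst c = cst c%:E) // integral_cst //.
  rewrite -[RHS]mule1; congr (_ * _)%E; exact: probability_setT.
by rewrite -!EFinM -!EFinD.
Qed.

Lemma mpoly a b c : measurable_fun setT (fun x => (poly2 a b c x)%:E).
Proof. exact: (measurable_int _ (int_poly a b c)). Qed.

Lemma ae_poly_ge0 a b c : {ae F, forall x, 0 <= poly2 a b c x} ->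
  0 <= a * (m ^+ 2 + s ^+ 2) + b * m + c.
Proof.
move=> H.
rewrite -lee_fin -I_poly.
rewrite (ae_eq_integral ((fun y => (poly2 a b c y)%:E)^\+)%E) //.
- by apply: integral_ge0 => x _; exact: funepos_ge0.
- exact: mpoly.
- by apply: measurable_funepos; exact: mpoly.
- apply: filterS H => x H0 _.
  by rewrite funeposE max_l // lee_fin.
Qed.

Lemma ae_poly_eq0 a b c : {ae F, forall x, 0 <= poly2 a b c x} ->
  a * (m ^+ 2 + s ^+ 2) + b * m + c = 0 ->
  {ae F, forall x, poly2 a b c x = 0}.
Proof.
move=> H H0.
have : (\int[F]_x `|(poly2 a b c x)%:E| = 0)%E.
  rewrite (ae_eq_integral (fun x => (poly2 a b c x)%:E)) //.
  - by rewrite I_poly H0.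
  - by apply: measurableT_comp => //; exact: mpoly.
  - exact: mpoly.
  - apply: filterS H => x H1 _.
    by rewrite gee0_abs // lee_fin.
move/(ae_eq_integral_abs _ measurableT (mpoly a b c)).
apply: filterS => x /(_ I) /= [].
by [].
Qed.

Lemma ae_between (l u : R) : {ae F, forall x, l <= x} -> {ae F, forall x, x <= u} ->
  s ^+ 2 <= (u - m) * (m - l).
Proof.
move=> Hl Hu.
have := @ae_poly_ge0 (-1) (u + l) (- (u * l)).
have H : {ae F, forall x, 0 <= poly2 (-1) (u + l) (- (u * l)) x}.
  apply: filterS2 Hl Hu => x Hl Hu.
  have -> : poly2 (-1) (u + l) (- (u * l)) x = (u - x) * (x - l).
    by rewrite /poly2; ring.
  by apply: mulr_ge0; rewrite subr_ge0.
move/(_ H) => H2.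
nra.
Qed.

Lemma ae_mean_gt (c e : R) : e != 0 -> {ae F, forall x, 0 <= e * (x - c)} ->
  0 < e * (m - c).
Proof.
move=> e0 H.
have H' : {ae F, forall x, 0 <= poly2 0 e (- (e * c)) x}.
  apply: filterS H => x; congr (_ <= _); rewrite /poly2; ring.
have H1 := @ae_poly_ge0 _ _ _ H'.
rewrite lt_neqAle; apply/andP; split; last first.
  by move: H1; congr (_ <= _); ring.
apply/negP => /eqP H2.
have H3 := @ae_poly_eq0 _ _ _ H'.
have : {ae F, forall x, 0 <= poly2 (-1) 0 (c ^+ 2) x}.
  have H4 : 0 * (m ^+ 2 + s ^+ 2) + e * m + - (e * c) = 0.
    by transitivity (e * (m - c)); [ring|rewrite -H2].
  apply: filterS (H3 H4) => x.
  rewrite /poly2 mul0r add0r => /eqP.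
  rewrite -mulrBr mulf_eq0 (negbTE e0) /= subr_eq0 => /eqP ->.
  by rewrite mul0r addr0 mulN1r addNr.
move/ae_poly_ge0.
have : m = c.
  move/eqP: H2; rewrite eq_sym mulf_eq0 (negbTE e0) /= subr_eq0 => /eqP //.
move=> ->.
have : 0 < s ^+ 2 by rewrite exprn_gt0.
lra.
Qed.


Lemma ae_False : ~ {ae F, forall x : R, False}.
Proof.
move=> [N [mN FN sub]].
have : (F [set: R] <= F N)%E.
  by apply: le_measure; rewrite ?inE // => x _; apply: sub.
have -> : F [set: R] = 1%E by exact: probability_setT.
by rewrite FN lee_fin ler10.
Qed.

Lemma null_of_ae (P : R -> Prop) (N : set R) : measurable N ->
  {ae F, forall x, P x} -> (forall x, N x -> ~ P x) -> F N = 0%E.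
Proof.
move=> mN [A [mA FA sub]] NP.
apply/eqP; rewrite eq_le measure_ge0 andbT -FA.
by apply: le_measure; rewrite ?inE // => x Nx; apply: sub; exact: NP.
Qed.

Lemma ae_of_null (P : R -> Prop) (N : set R) : measurable N -> F N = 0%E ->
  (forall x, ~ P x -> N x) -> {ae F, forall x, P x}.
Proof. by move=> mN FN H; exists N; split => // x /= nP; exact: H. Qed.

Lemma aeU : {ae F, forall x, (x%:E <= ess_sup_distr F)%E}.
Proof. exact: ess_sup_ge. Qed.
Lemma aeL : {ae F, forall x, (ess_inf_distr F <= x%:E)%E}.
Proof. exact: ess_inf_le. Qed.

Lemma U_neqNy : ess_sup_distr F <> -oo%E.
Proof.
move=> E; apply: ae_False; move: aeU; apply: filterS => x /=; rewrite E.
by rewrite leNgt ltNyr.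
Qed.

Lemma L_neqy : ess_inf_distr F <> +oo%E.
Proof.
move=> E; apply: ae_False; move: aeL; apply: filterS => x /=; rewrite E.
by rewrite leNgt ltry.
Qed.

Lemma aeu {u} : ess_sup_distr F = u%:E -> {ae F, forall x, x <= u}.
Proof. by move=> E; apply: filterS aeU => x; rewrite E lee_fin. Qed.
Lemma ael {l} : ess_inf_distr F = l%:E -> {ae F, forall x, l <= x}.
Proof. by move=> E; apply: filterS aeL => x; rewrite E lee_fin. Qed.

Lemma mu_lt {u} : ess_sup_distr F = u%:E -> m < u.
Proof.
move=> E.
have H : {ae F, forall x, 0 <= -1 * (x - u)}.
  by move: (aeu E); apply: filterS => x xu; rewrite mulN1r opprB subr_ge0.
have e0 : (-1 : R) != 0 by rewrite oppr_eq0 oner_eq0.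
have := @ae_mean_gt _ _ e0 H.
lra.
Qed.

Lemma lm_lt {l} : ess_inf_distr F = l%:E -> l < m.
Proof.
move=> E.
have H : {ae F, forall x, 0 <= 1 * (x - l)}.
  by move: (ael E); apply: filterS => x xl; rewrite mul1r subr_ge0.
have e0 : (1 : R) != 0 by rewrite oner_eq0.
have := @ae_mean_gt _ _ e0 H.
lra.
Qed.

Lemma mU : (m%:E < ess_sup_distr F)%E.
Proof.
case E: (ess_sup_distr F) => [u| |].
- by rewrite lte_fin; exact: mu_lt.
- exact: ltry.
- by exfalso; exact: U_neqNy.
Qed.

Lemma Lm : (ess_inf_distr F < m%:E)%E.
Proof.
case E: (ess_inf_distr F) => [l| |].
- by rewrite lte_fin; exact: lm_lt.
- by exfalso; exact: L_neqy.
- exact: ltNyr.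
Qed.

Lemma key_d : exists d, 0 < d /\ ((m + d)%:E <= ess_sup_distr F)%E /\
  (ess_inf_distr F <= (m - s ^+ 2 / d)%:E)%E.
Proof.
have s20 : 0 < s ^+ 2 by rewrite exprn_gt0.
case EU: (ess_sup_distr F) => [u| |]; case EL: (ess_inf_distr F) => [l| |].
- have hu := mu_lt EU; have hl := lm_lt EL.
  have H := @ae_between _ _ (ael EL) (aeu EU).
  exists (u - m); split; first lra.
  split; first by rewrite lee_fin; lra.
  rewrite lee_fin.
  have : s ^+ 2 / (u - m) <= m - l.
    by rewrite ler_pdivrMr ?subr_gt0 // mulrC.
  lra.
- by exfalso; exact: L_neqy.
- have hu := mu_lt EU.
  exists (u - m); split; first lra.
  split; first by rewrite lee_fin; lra.
  exact: leNye.
- have hl := lm_lt EL.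
  exists (s ^+ 2 / (m - l)); split; first by apply: divr_gt0; lra.
  split; first exact: leey.
  have -> : s ^+ 2 / (s ^+ 2 / (m - l)) = m - l.
    have ml : m - l != 0 by rewrite subr_eq0 gt_eqF.
    by field; rewrite ml gt_eqF.
  rewrite lee_fin; lra.
- by exfalso; exact: L_neqy.
- exists 1; split; first lra.
  by split; [exact: leey|exact: leNye].
- by exfalso; exact: U_neqNy.
- by exfalso; exact: U_neqNy.
- by exfalso; exact: U_neqNy.
Qed.

Lemma tp_inL x1 x2 p (p0 : 0 <= p) (p1 : p <= 1) :
  p * x1 + (1 - p) * x2 = m -> p * x1 ^+ 2 + (1 - p) * x2 ^+ 2 = m ^+ 2 + s ^+ 2 ->
  in_L m s (tpf x1 x2 p p0 p1).
Proof.
move=> H1 H2.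
have [i1 e1] := @tp_int R x1 x2 p p0 p1 (fun x => x) (@measurable_id _ _ _).
have [i2 e2] := @tp_int R x1 x2 p p0 p1 (fun x => x ^+ 2) (@exprn_measurable _ _ 2).
split; first exact: i1.
split; first exact: i2.
split.
  by transitivity ((p * x1 + (1 - p) * x2)%:E); [exact: e1|rewrite H1].
by transitivity ((p * x1 ^+ 2 + (1 - p) * x2 ^+ 2)%:E); [exact: e2|rewrite H2].
Qed.

Lemma tp_two (S : set R) x1 x2 p (p0 : 0 <= p) (p1 : p <= 1) :
  p < 1 -> 0 < p -> x1 \in S -> x2 \in S -> two_point_in S (tpf x1 x2 p p0 p1).
Proof.
move=> plt pgt h1 h2.
exists x1, x2, p, (1 - p); split => //.
- by rewrite p0 plt.
- by rewrite subr_ge0 p1 /= ltrBlDr ltrDl.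
- by rewrite addrC subrK.
- by move=> A _; exact: tpfE.
Qed.

Lemma part1 : exists Fs : probability R R, in_L m s Fs /\ two_point_in (ess_range F) Fs.
Proof.
have [d [d0 [dU dL]]] := key_d.
have s20 : 0 < s ^+ 2 by rewrite exprn_gt0.
have d20 : 0 < d ^+ 2 by rewrite exprn_gt0.
set x1 := m - s ^+ 2 / d; set x2 := m + d.
set D := d ^+ 2 + s ^+ 2.
have D0 : 0 < D by rewrite /D; lra.
set p := d ^+ 2 / D.
have pgt : 0 < p by rewrite /p divr_gt0.
have plt : p < 1 by rewrite /p ltr_pdivrMr // mul1r /D; lra.
have p0 : 0 <= p by exact: ltW.
have p1 : p <= 1 by exact: ltW.
have dn0 : d != 0 by rewrite gt_eqF.
have Dn0 : D != 0 by rewrite gt_eqF.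
exists (tpf x1 x2 p p0 p1); split.
  have Dn0' : d ^+ 2 + s ^+ 2 != 0 by exact: Dn0.
  apply: tp_inL; rewrite /x1 /x2 /p /D.
    by field; rewrite Dn0' dn0.
  by field; rewrite Dn0' dn0.
have x1m : x1 <= m.
  by rewrite /x1 lerBlDr lerDl; apply: divr_ge0; [exact: ltW|exact: ltW].
apply: tp_two => //; rewrite /ess_range; apply/mem_set; split => //.
- apply: le_trans (ltW mU); by rewrite lee_fin.
- apply: le_trans (ltW Lm) _; rewrite lee_fin /x2; lra.
Qed.

Lemma sym_mean a : (forall x, F [set y | y - a > x] = F [set y | y - a < - x]) -> m = a.
Proof.
move=> Hs.
have iY : F.-integrable setT (EFin \o shiftY a).
  apply: eq_integrable (int_poly 0 1 (- a)) => // x _.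
  by rewrite /= /poly2 /shiftY; congr EFin; ring.
have iZ : F.-integrable setT (EFin \o shiftZ a).
  apply: eq_integrable (int_poly 0 (-1) a) => // x _.
  by rewrite /= /poly2 /shiftZ; congr EFin; ring.
have LY : shiftY a \in Lfun F 1 by apply/Lfun1_integrable.
have LZ : shiftZ a \in Lfun F 1 by apply/Lfun1_integrable.
have EY : ('E_F[shiftY a] = (m - a)%:E)%E.
  rewrite expectation_def.
  transitivity (\int[F]_x ((poly2 0 1 (- a) x)%:E))%E.
    apply: eq_integral => x _; rewrite /poly2; congr EFin.
    by transitivity (x - a); [by []|ring].
  by rewrite I_poly; congr EFin; ring.
have EZ : ('E_F[shiftZ a] = (a - m)%:E)%E.
  rewrite expectation_def.
  transitivity (\int[F]_x ((poly2 0 (-1) a x)%:E))%E.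
    apply: eq_integral => x _; rewrite /poly2; congr EFin.
    by transitivity (a - x); [by []|ring].
  by rewrite I_poly; congr EFin; ring.
have Hcc r : ccdf (P:=F) (shiftY a) r = ccdf (P:=F) (shiftZ a) r.
  rewrite /ccdf /distribution /pushforward.
  have -> : shiftY a @^-1` `]r, +oo[ = [set y | y - a > r].
    by apply/seteqP; split => y; rewrite /= in_itv /= andbT /shiftY.
  have -> : shiftZ a @^-1` `]r, +oo[ = [set y | y - a < - r].
    by apply/seteqP; split => y; rewrite /= in_itv /= andbT /shiftZ => H; lra.
  exact: Hs.
have Hc r : cdf (P:=F) (shiftY a) r = cdf (P:=F) (shiftZ a) r.
  by rewrite !cdf_1_ccdf Hcc.
have : ('E_F[shiftY a] = 'E_F[shiftZ a])%E.
  rewrite (expectation_cdf_ccdf LY) (expectation_cdf_ccdf LZ).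
  congr (_ - _)%E; apply: eq_integral => r _; [exact: Hcc|exact: Hc].
rewrite EY EZ => /eqP; rewrite eqe => /eqP H.
lra.
Qed.


Lemma mirror_le u : (forall x, F [set y | y - m > x] = F [set y | y - m < - x]) ->
  {ae F, forall x, x <= u} -> {ae F, forall x, 2 * m - u <= x}.
Proof.
move=> Hs Hu.
have N0 : F [set y | y - m > u - m] = 0%E.
  apply: (@null_of_ae _ _ (mgt _ _) Hu) => x /= H1 H2; lra.
rewrite Hs in N0.
apply: (@ae_of_null _ _ (mlt _ _) N0) => x /negP; rewrite -ltNge /= => H; lra.
Qed.

Lemma mirror_ge l : (forall x, F [set y | y - m > x] = F [set y | y - m < - x]) ->
  {ae F, forall x, l <= x} -> {ae F, forall x, x <= 2 * m - l}.
Proof.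
move=> Hs Hl.
have N0 : F [set y | y - m < - (m - l)] = 0%E.
  apply: (@null_of_ae _ _ (mlt _ _) Hl) => x /= H1 H2; lra.
rewrite -Hs in N0.
apply: (@ae_of_null _ _ (mgt _ _) N0) => x /negP; rewrite -ltNge /= => H; lra.
Qed.

Lemma part2 : symmetric_distr F -> exists Fs : probability R R,
     [/\ in_L m s Fs, two_point_in (ess_range F) Fs & symmetric_distr Fs].
Proof.
case=> a Hs.
have ma := @sym_mean _ Hs; subst a.
have hU : ((m + s)%:E <= ess_sup_distr F)%E.
  case EU: (ess_sup_distr F) => [u| |].
  - have hu := mu_lt EU.
    have H := @ae_between _ _ (@mirror_le _ Hs (aeu EU)) (aeu EU).
    have H' : s ^+ 2 <= (u - m) ^+ 2.
      by move: H; have -> : (u - m) * (m - (2 * m - u)) = (u - m) ^+ 2 by ring.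
    have : s <= u - m.
      by rewrite -ler_sqr ?nnegrE ?(ltW hs) //; lra.
    rewrite lee_fin; lra.
  - exact: leey.
  - by exfalso; exact: U_neqNy.
have hL : (ess_inf_distr F <= (m - s)%:E)%E.
  case EL: (ess_inf_distr F) => [l| |].
  - have hl := lm_lt EL.
    have H := @ae_between _ _ (ael EL) (@mirror_ge _ Hs (ael EL)).
    have H' : s ^+ 2 <= (m - l) ^+ 2.
      by move: H; have -> : (2 * m - l - m) * (m - l) = (m - l) ^+ 2 by ring.
    have : s <= m - l.
      by rewrite -ler_sqr ?nnegrE ?(ltW hs) //; lra.
    rewrite lee_fin; lra.
  - by exfalso; exact: L_neqy.
  - exact: leNye.
have p0 : 0 <= (2^-1 : R) by rewrite invr_ge0.
have p1 : (2^-1 : R) <= 1 by rewrite invf_le1 // ler1n.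
exists (tpf (m - s) (m + s) (2^-1) p0 p1); split.
- by apply: tp_inL; field.
- apply: tp_two.
  + by rewrite invf_lt1 // ltr1n.
  + by rewrite invr_gt0.
  + apply/mem_set; split => //.
    have hh : m - s <= m + s by have := hs; lra.
    by apply: (le_trans _ hU); rewrite lee_fin.
  + apply/mem_set; split => //.
    have hh : m - s <= m + s by have := hs; lra.
    by apply: (le_trans hL); rewrite lee_fin.
- exists m => x.
  apply: (eq_trans (tpfE _ _ _ _ _ _)); apply: esym.
  apply: (eq_trans (tpfE _ _ _ _ _ _)); apply: esym.
  have mE (P : R -> bool) z : (z \in [set y | P y]) = P z.
    by apply/idP/idP => [/set_mem //|?]; exact: mem_set.
  rewrite !diracE !mE.
  have -> : m - s - m = - s by ring.
  have -> : m + s - m = s by ring.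
  have -> : (1 - 2^-1 : R) = 2^-1.
    by rewrite [X in X - _](splitr 1) mul1r addrK.
  rewrite ltrN2 (ltrNr s).
  by rewrite addeC.
Qed.
End moments.

Theorem lemma1 (R : realType) (m s : R) (hs : 0 < s) (F : probability R R) :
  in_L m s F ->
  (exists Fs : probability R R, in_L m s Fs /\ two_point_in (ess_range F) Fs) /\
  (symmetric_distr F ->
   exists Fs : probability R R,
     [/\ in_L m s Fs, two_point_in (ess_range F) Fs & symmetric_distr Fs]).
Proof.
move=> HL; split; first exact: (@part1 R m s hs F HL).
exact: (@part2 R m s hs F HL).
Qed.
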